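(* Let $\mathbf{T}\in\{0,1\}^{n\times\ell}$ be a matrix with $\delta(\mathbf{T})\le 3$ and $|\mathcal{T}_3|\ge 5$. Then there exist $j_1\ne j_2\in[\ell]$ such that: $T_1\subseteq\{j_1,j_2\}$ for each $T_1\in\mathcal{T}_1$; $T_2\cap\{j_1,j_2\}\ne\emptyset$ for each $T_2\in\mathcal{T}_2$; and $\{j_1,j_2\}\subseteq T_3$ for each $T_3\in\mathcal{T}_3$. Moreover, with $\mathcal{T}_2'=\{T_2\in\mathcal{T}_2: j_1\in T_2,\ j_2\notin T_2\}$ and $\mathcal{T}_2''=\{T_2\in\mathcal{T}_2: j_1\notin T_2,\ j_2\in T_2\}$, exactly one of the following holds: (a) $\mathcal{T}_2'=\emptyset$ or $\mathcal{T}_2''=\emptyset$; (b) there is $j_3\in[\ell]$ with $\mathcal{T}_2'=\{\{j_1,j_3\}\}$ and $\mathcal{T}_2''=\{\{j_2,j_3\}\}$.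
   Context: For rows $u,w\in\{0,1\}^\ell$, $D(u,w)=\{j:u[j]\ne w[j]\}$ and $d(u,w)=|D(u,w)|$; $\delta(\mathbf{T})=\max_{i\ne i'}d(\mathbf{T}[i],\mathbf{T}[i'])$, where $\mathbf{T}[i]$ is the $i$-th row. For $x\in\mathbb{N}$, $\mathcal{T}_x$ is the set system (without duplicates) $\{D(\mathbf{T}[i],\mathbf{T}[n]): i\in[n-1],\ d(\mathbf{T}[i],\mathbf{T}[n])=x\}$. *)

(* Defs.v *)
From mathcomp Require Import all_boot all_order all_algebra.
Set Implicit Arguments. Unset Strict Implicit. Unset Printing Implicit Defensive.

Definition Dset (l : nat) (u w : 'rV[bool]_l) : {set 'I_l} :=
  [set j | u ord0 j != w ord0 j].

Definition dist (l : nat) (u w : 'rV[bool]_l) : nat := #|Dset u w|.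

(* delta(T) = max over i <> i' of d(T[i], T[i']) (0 if fewer than 2 rows) *)
Definition delta (m l : nat) (T : 'M[bool]_(m, l)) : nat :=
  \max_(i : 'I_m) \max_(i' : 'I_m | i != i') dist (row i T) (row i' T).

(* T_x = { D(T[i], T[last]) : i a non-last row, d(T[i], T[last]) = x },
   for a matrix with n.+1 rows (the last row is ord_max). *)
Definition Tsys (n l : nat) (T : 'M[bool]_(n.+1, l)) (x : nat) : {set {set 'I_l}} :=
  [set Dset (row i T) (row ord_max T) |
     i in [pred i : 'I_n.+1 | (i != ord_max) && (dist (row i T) (row ord_max T) == x)]].

(* Main.v *)
Require Import Defs.
From mathcomp Require Import all_boot all_order all_algebra.
From mathcomp Require Import zify.
Set Implicit Arguments. Unset Strict Implicit. Unset Printing Implicit Defensive.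

Section Abs.
Variable I : finType.

Lemma sub_card_eq (X Y : {set I}) : X \subset Y -> #|Y| <= #|X| -> X = Y.
Proof. by move=> h1 h2; apply/eqP; rewrite eqEcard h1 h2. Qed.

Lemma card3_eq (C P : {set I}) w : #|C| = 3 -> w \in C -> w \notin P ->
  P \subset C -> #|P| = 2 -> C = w |: P.
Proof.
move=> hC wC wP PC cP; symmetry; apply: sub_card_eq.
  by rewrite subUset sub1set wC PC.
by rewrite cardsU1 wP cP hC.
Qed.

Lemma pair_eq (X : {set I}) a b : #|X| = 2 -> a \in X -> b \in X -> a != b ->
  X = [set a; b].
Proof.
move=> hX aX bX ab; symmetry; apply: sub_card_eq.
  by rewrite subUset !sub1set aX bX.
by rewrite cards2 ab hX.
Qed.

Variable F : nat -> {set {set I}}.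
Hypothesis Hc : forall x A, A \in F x -> #|A| = x.
Hypothesis H : forall x y A B, A \in F x -> B \in F y -> x + y <= 3 + 2 * #|A :&: B|.

Lemma meet x y A B : A \in F x -> B \in F y -> 3 < x + y -> exists2 w, w \in A & w \in B.
Proof.
move=> hA hB hxy; have := H hA hB => h.
have /card_gt0P [w] : 0 < #|A :&: B| by lia.
by rewrite inE => /andP[]; exists w.
Qed.

Lemma F3_small (P : {set I}) : #|P| = 2 -> (forall C, C \in F 3 -> P \subset C) ->
  forall S : {set {set I}}, #|S| <= 2 -> (forall C, C \in F 3 -> exists2 w, w \in C & (w \notin P) && (w |: P \in S)) ->
  #|F 3| <= 2.
Proof.
move=> cP HP S cS hS; apply: leq_trans cS; apply: subset_leq_card.
apply/subsetP => C HC; have [w wC /andP[wP wS]] := hS C HC.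
by rewrite (card3_eq (Hc HC) wC wP (HP C HC) cP).
Qed.


Lemma ge2_3 A B : A \in F 3 -> B \in F 3 -> 2 <= #|A :&: B|.
Proof. move=> hA hB; have := H hA hB; lia. Qed.

Lemma sunflower : 5 <= #|F 3| -> exists j1 j2, j1 != j2 /\
   forall C, C \in F 3 -> [set j1; j2] \subset C.
Proof.
move=> H5.
have /card_gt1P [A [B [HA HB AneB]]] : 1 < #|F 3| by lia.
have cA := Hc HA; have cB := Hc HB.
have cAB : #|A :&: B| = 2.
  have h1 := ge2_3 HA HB.
  have h2 : #|A :&: B| <= 3 by rewrite -cA; apply: subset_leq_card; apply: subsetIl.
  have h3 : #|A :&: B| != 3.
    apply: contra AneB => /eqP h3.
    have eA : A :&: B = A by apply: sub_card_eq; rewrite ?subsetIl ?h3 ?cA.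
    have eB : A :&: B = B by apply: sub_card_eq; rewrite ?subsetIr ?h3 ?cB.
    by apply/eqP; rewrite -eA {1}eB.
  lia.
have [j1 [j2 [j12 eP]]] : exists j1 j2, j1 != j2 /\ A :&: B = [set j1; j2].
  by apply/cards2P/eqP.
exists j1, j2; split => //.
rewrite -eP; set P := A :&: B; set U := A :|: B.
have PU : P \subset U.
  by apply/subsetP => x; rewrite !inE => /andP[->].
have cU : #|U| = 4 by have := cardsUI A B; rewrite -/P -/U cAB cA cB; lia.
have formula D : #|D :&: A| + #|D :&: B| = #|D :&: U| + #|D :&: P|.
  rewrite -cardsUI; congr (_ + _); apply: eq_card => x; rewrite !inE;
  by case: (x \in D); case: (x \in A); case: (x \in B).
have claim1 D : D \in F 3 -> ~~ (D \subset U) -> P \subset D.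
  move=> HD nDU.
  have le2 : ~~ (3 <= #|D :&: U|).
    apply: contra nDU => h; apply/setIidPl; apply: sub_card_eq; first exact: subsetIl.
    by rewrite (Hc HD).
  have h1 := ge2_3 HD HA; have h2 := ge2_3 HD HB; have h3 := formula D.
  have h4 : #|D :&: P| <= 2 by rewrite -cAB; apply: subset_leq_card; apply: subsetIr.
  apply/setIidPr; apply: sub_card_eq; first exact: subsetIr.
  rewrite cAB; lia.
move=> C0 HC0; apply: contraT => nPC0.
have C0U : C0 \subset U by apply: contraR nPC0; apply: claim1.
have C0P : #|C0 :&: P| <= 1.
  have : #|C0 :&: P| <= 2 by rewrite -cAB; apply: subset_leq_card; apply: subsetIr.
  have : #|C0 :&: P| != 2.
    apply: contra nPC0 => /eqP h; apply/setIidPr; apply: sub_card_eq; first exact: subsetIr.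
    by rewrite h cAB.
  lia.
have allU D : D \in F 3 -> D \subset U.
  move=> HD; apply: contraT => nDU.
  have PD := claim1 D HD nDU.
  have [x xD xU] := subsetPn nDU.
  have xP : x \notin P by apply: contra xU; apply: (subsetP PU).
  have eD := card3_eq (Hc HD) xD xP PD cAB.
  have : C0 :&: D = C0 :&: P.
    apply/setP => y; rewrite eD !inE.
    case: (eqVneq y x) => [-> | _] //=.
    by rewrite (negbTE (contra (subsetP C0U x) xU)).
  move=> h2; have := ge2_3 HC0 HD; rewrite h2 => h1.
  by have := leq_trans h1 C0P.
have : #|F 3| <= 4.
  rewrite -cU; apply: leq_trans (leq_imset_card (fun x => U :\ x) U).
  apply: subset_leq_card; apply/subsetP => D HD.
  have DU := allU D HD.
  have nUD : ~~ (U \subset D).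
    apply/negP => /subset_leq_card; rewrite (Hc HD) cU; done.
  have [x xU xD] := subsetPn nUD.
  apply/imsetP; exists x => //.
  apply: sub_card_eq.
    apply/subsetP => y yD; rewrite in_setD1 (subsetP DU y yD) andbT.
    by apply: contraNneq xD => <-.
  have e := cardsD1 x U; rewrite xU cU add1n in e.
  by case: e => <-; rewrite (Hc HD).
move=> h; exfalso; lia.
Qed.


Lemma common j1 j2 X Y : X \in F 2 -> Y \in F 2 -> j1 \in X -> j2 \notin X ->
  j1 \notin Y -> j2 \in Y -> exists w, [/\ w \in X, w \in Y, w != j1 & w != j2].
Proof.
move=> HX HY j1X j2X j1Y j2Y.
have [w wX wY] := meet HX HY (isT : 3 < 2 + 2).
exists w; split => //.
  by apply: contraTneq wY => ->.
by apply: contraTneq wX => ->.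
Qed.

Lemma abs_main : 5 <= #|F 3| ->
  exists (j1 j2 : I),
    [/\ j1 != j2,
        (forall A, A \in F 1 -> A \subset [set j1; j2]),
        (forall A, A \in F 2 -> A :&: [set j1; j2] != set0),
        (forall A, A \in F 3 -> [set j1; j2] \subset A) &
        let T2' := [set A in F 2 | (j1 \in A) && (j2 \notin A)] in
        let T2'' := [set A in F 2 | (j1 \notin A) && (j2 \in A)] in
        let Pa := (T2' = set0) \/ (T2'' = set0) in
        let Pb := exists j3 : I,
                    T2' = [set [set j1; j3]] /\ T2'' = [set [set j2; j3]] in
        (Pa /\ ~ Pb) \/ (~ Pa /\ Pb)].
Proof.
move=> H5.
have [j1 [j2 [j12 HP]]] := sunflower H5.
exists j1, j2; set P := [set j1; j2].
have cP : #|P| = 2 by rewrite cards2 j12.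
split => //.
- move=> A HA; apply/subsetP => y yA; apply: contraT => yP; exfalso.
  have [z eA] : exists z, A = [set z] by apply/cards1P; rewrite (Hc HA).
  have yC : forall C, C \in F 3 -> y \in C.
    move=> C HC; have [w wA wC] := meet HA HC (isT : 3 < 1 + 3).
    by move: wA yA wC; rewrite eA !inE => /eqP-> /eqP->.
  have : #|F 3| <= 2.
    apply: (F3_small cP HP (S := [set y |: P])); first by rewrite cards1.
    move=> C HC; exists y; first exact: yC.
    by rewrite yP set11.
  move=> h; lia.
- move=> B HB; apply: contraT; rewrite negbK => /eqP BP0.
  have [y [z [yz eB]]] : exists y z, y != z /\ B = [set y; z].
    by apply/cards2P; rewrite (Hc HB).
  have : #|F 3| <= 2.
    apply: (F3_small cP HP (S := [set y |: P; z |: P])).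
      by rewrite cards2; case: (_ != _).
    move=> C HC; have [w wB wC] := meet HB HC (isT : 3 < 2 + 3).
    exists w => //; apply/andP; split.
      apply/negP => wP; have : w \in B :&: P by rewrite inE wB wP.
      by rewrite BP0 inE.
    by move: wB; rewrite eB !inE => /orP[] /eqP->; rewrite eqxx ?orbT.
  move=> h; exfalso; lia.
- cbv zeta.
  set S1 := [set A in F 2 | (j1 \in A) && (j2 \notin A)].
  set S2 := [set A in F 2 | (j1 \notin A) && (j2 \in A)].
  have [e1|n1] := eqVneq S1 set0.
    left; split; first by left.
    case=> j3 [e1' e2']; have : [set j1; j3] \in S1 by rewrite e1' set11.
    by rewrite e1 inE.
  have [e2|n2] := eqVneq S2 set0.
    left; split; first by right.
    case=> j3 [e1' e2']; have : [set j2; j3] \in S2 by rewrite e2' set11.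
    by rewrite e2 inE.
  right; split.
    by case=> /eqP; [rewrite (negbTE n1) | rewrite (negbTE n2)].
  have [B1 B1S] := set0Pn _ n1; have [B2 B2S] := set0Pn _ n2.
  move: (B1S) (B2S); rewrite !inE => /andP[HB1 /andP[j1B1 j2B1]] /andP[HB2 /andP[j1B2 j2B2]].
  have [w [wB1 wB2 wj1 wj2]] := common HB1 HB2 j1B1 j2B1 j1B2 j2B2.
  have eB1 : B1 = [set j1; w] by apply: pair_eq (Hc HB1) j1B1 wB1 _; rewrite eq_sym.
  have eB2 : B2 = [set j2; w] by apply: pair_eq (Hc HB2) j2B2 wB2 _; rewrite eq_sym.
  exists w; split; apply/setP => X; rewrite in_set1; apply/idP/idP.
  + rewrite inE => /andP[HX /andP[j1X j2X]].
    have [w' [w'X w'B2 w'j1 w'j2]] := common HX HB2 j1X j2X j1B2 j2B2.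
    have ew : w' = w by move: w'B2; rewrite eB2 !inE (negbTE w'j2) => /eqP.
    rewrite ew in w'X w'j1.
    by apply/eqP; apply: pair_eq (Hc HX) j1X w'X _; rewrite eq_sym.
  + by move=> /eqP->; rewrite -eB1.
  + rewrite inE => /andP[HX /andP[j1X j2X]].
    have [w' [w'B1 w'X w'j1 w'j2]] := common HB1 HX j1B1 j2B1 j1X j2X.
    have ew : w' = w by move: w'B1; rewrite eB1 !inE (negbTE w'j1) => /eqP.
    rewrite ew in w'X w'j2.
    by apply/eqP; apply: pair_eq (Hc HX) j2X w'X _; rewrite eq_sym.
  + by move=> /eqP->; rewrite -eB2.
Qed.

End Abs.

Lemma dist_le (m l : nat) (T : 'M[bool]_(m, l)) i i' :
  delta T <= 3 -> i != i' -> dist (row i T) (row i' T) <= 3.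
Proof.
move=> hd h; apply: leq_trans hd; rewrite /delta.
apply: leq_trans (leq_bigmax i).
exact: (leq_bigmax_cond (F := fun i' => dist (row i T) (row i' T)) i' h).
Qed.

Lemma Dset_sym (l : nat) (u v w : 'rV[bool]_l) :
  Dset u v = (Dset u w :|: Dset v w) :\: (Dset u w :&: Dset v w).
Proof.
apply/setP => j; rewrite !inE.
by case: (u ord0 j); case: (v ord0 j); case: (w ord0 j).
Qed.

Lemma card_sym (I : finType) (A B : {set I}) :
  #|(A :|: B) :\: (A :&: B)| + 2 * #|A :&: B| = #|A| + #|B|.
Proof.
rewrite cardsD.
have -> : (A :|: B) :&: (A :&: B) = A :&: B.
  by apply/setIidPr/subsetP => x; rewrite !inE => /andP[->].
have := cardsUI A B.
have : #|A :&: B| <= #|A :|: B|.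
  by apply: subset_leq_card; apply/subsetP => x; rewrite !inE => /andP[->].
lia.
Qed.

Theorem lemma16 (n l : nat) (T : 'M[bool]_(n.+1, l)) :
  delta T <= 3 ->
  5 <= #|Tsys T 3| ->
  exists (j1 j2 : 'I_l),
    [/\ j1 != j2,
        (forall A, A \in Tsys T 1 -> A \subset [set j1; j2]),
        (forall A, A \in Tsys T 2 -> A :&: [set j1; j2] != set0),
        (forall A, A \in Tsys T 3 -> [set j1; j2] \subset A) &
        let T2' := [set A in Tsys T 2 | (j1 \in A) && (j2 \notin A)] in
        let T2'' := [set A in Tsys T 2 | (j1 \notin A) && (j2 \in A)] in
        let Pa := (T2' = set0) \/ (T2'' = set0) in
        let Pb := exists j3 : 'I_l,
                    T2' = [set [set j1; j3]] /\ T2'' = [set [set j2; j3]] in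
        (Pa /\ ~ Pb) \/ (~ Pa /\ Pb)].
Proof.
move=> hd h5; apply: (abs_main (F := Tsys T)) h5.
  move=> x A /imsetP [i]; rewrite inE => /andP[_ /eqP hx] ->; exact hx.
move=> x y A B /imsetP [i]; rewrite inE => /andP[ni /eqP hx] ->.
move=> /imsetP [i']; rewrite inE => /andP[ni' /eqP hy] ->.
case: (eqVneq i i') => [ei | ne].
  rewrite -ei in hy *; rewrite setIid; move: hx hy; rewrite /dist; lia.
have := dist_le hd ne; rewrite /dist (Dset_sym _ _ (row ord_max T)).
have := card_sym (Dset (row i T) (row ord_max T)) (Dset (row i' T) (row ord_max T)).
move: hx hy; rewrite /dist; lia.
Qed.
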